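(* Let $A_1$ and $A_2$ be simple and covering literals that are unifiable with a most general unifier $\sigma$. Then $A_1\sigma$ is simple.
   Context: A compound term is a term that is neither a variable nor a constant. $\mathrm{Var}(E)$ denotes the set of variables of $E$. A literal is simple if each argument is a variable, a constant, or a term $f(u_1,\dots,u_n)$ with each $u_i$ a variable or a constant. A literal is covering if every compound term $t$ occurring in it satisfies $\mathrm{Var}(t)$ equal to the set of variables of the literal. *)

(* Defs.v *)
From Stdlib Require Import List.
Import ListNotations.

Inductive term : Type :=
| Var : nat -> term
| Fun : nat -> list term -> term.

Record literal : Type := Lit { lsign : bool; lpred : nat; largs : list term }.

Definition is_var (t : term) : Prop := exists x, t = Var x.
Definition is_const (t : term) : Prop := exists c, t = Fun c [].
Definition is_compound (t : term) : Prop := ~ is_var t /\ ~ is_const t.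

Inductive var_in (x : nat) : term -> Prop :=
| vi_var : var_in x (Var x)
| vi_fun : forall f ts t, In t ts -> var_in x t -> var_in x (Fun f ts).

Definition var_in_lit (x : nat) (L : literal) : Prop :=
  exists t, In t (largs L) /\ var_in x t.

Inductive subterm (s : term) : term -> Prop :=
| st_refl : subterm s s
| st_fun : forall f ts t, In t ts -> subterm s t -> subterm s (Fun f ts).

Definition occurs_in_lit (t : term) (L : literal) : Prop :=
  exists u, In u (largs L) /\ subterm t u.

Definition var_or_const (t : term) : Prop := is_var t \/ is_const t.

Definition simple_lit (L : literal) : Prop :=
  forall t, In t (largs L) ->
    is_var t \/ is_const t \/
    exists f us, t = Fun f us /\ forall u, In u us -> var_or_const u.

Definition covering_lit (L : literal) : Prop :=
  forall t, occurs_in_lit t L -> is_compound t ->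
    forall x, var_in x t <-> var_in_lit x L.

Definition subst := nat -> term.

Fixpoint tsubst (s : subst) (t : term) : term :=
  match t with
  | Var x => s x
  | Fun f ts => Fun f (map (tsubst s) ts)
  end.

Definition lsubst (s : subst) (L : literal) : literal :=
  Lit (lsign L) (lpred L) (map (tsubst s) (largs L)).

Definition unifier (s : subst) (L1 L2 : literal) : Prop :=
  lsubst s L1 = lsubst s L2.

Definition mgu (s : subst) (L1 L2 : literal) : Prop :=
  unifier s L1 L2 /\
  forall th, unifier th L1 L2 ->
    exists eta, forall x, th x = tsubst eta (s x).

(* Main.v *)
Require Import Defs.
From Stdlib Require Import List Lia ClassicalEpsilon.
Import ListNotations.

Fixpoint size (t:term) : nat :=
  match t with Var _ => 1 | Fun _ ts => S (list_sum (map size ts)) end.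

Lemma size_in t ts : In t ts -> size t <= list_sum (map size ts).
Proof. induction ts as [|a ts IH]; simpl; [tauto|]. intros [->|H]; [lia| specialize (IH H); lia]. Qed.

Lemma varin_le s x r : var_in x r -> size (s x) <= size (tsubst s r).
Proof.
  induction 1 as [|f ts t Hin Hv IH]; simpl; [lia|].
  pose proof (size_in _ _ (in_map (tsubst s) _ _ Hin)). lia.
Qed.

Lemma varin_lt s x f ts : var_in x (Fun f ts) -> size (s x) < size (tsubst s (Fun f ts)).
Proof.
  intro H; inversion H as [|f0 ts0 t Hin Hv]; subst. simpl.
  pose proof (varin_le s x t Hv). pose proof (size_in _ _ (in_map (tsubst s) _ _ Hin)). lia.
Qed.

Definition iscomp (r : term) := exists f a l, r = Fun f (a::l).
Definition vc (u:term) := (exists a, u = Var a) \/ (exists c, u = Fun c []).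
Definition flatt (t:term) := (exists x, t = Var x) \/ (exists f us, t = Fun f us /\ forall u, In u us -> vc u).
Definition SL (l: list term) := forall t, In t l -> flatt t.
Definition CL (l: list term) := forall r x, In r l -> iscomp r -> (exists t, In t l /\ var_in x t) -> var_in x r.

Lemma comb_swap (a b : list term) (s t : term) : In (s,t) (combine a b) -> In (t,s) (combine b a).
Proof.
  revert b; induction a as [|x a IH]; intros [|y b]; simpl; try tauto.
  intros [H|H]; [left; injection H; intros; subst; reflexivity | right; auto].
Qed.

Lemma comb_eq (f: term->term) a b s t : map f a = map f b -> In (s,t)(combine a b) -> f s = f t.
Proof.
  revert b; induction a as [|x a IH]; intros [|y b]; simpl; try tauto; intros H P; try discriminate.
  injection H; intros. destruct P as [E|E]; [injection E; intros; subst; auto | eauto].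
Qed.

Lemma comb_ex (a b : list term) (s : term) : length a = length b -> In s a -> exists t, In (s,t) (combine a b).
Proof.
  revert b; induction a as [|x a IH]; intros [|y b]; simpl; try tauto; intros H P; try discriminate.
  destruct P as [->|P]; [eauto|]. destruct (IH b ltac:(lia) P) as [t Ht]; eauto.
Qed.

Lemma map_ext_comb (f:term->term) a b : length a = length b ->
  (forall s t, In (s,t)(combine a b) -> f s = f t) -> map f a = map f b.
Proof.
  revert b; induction a as [|x a IH]; intros [|y b]; simpl; try tauto; intros H P; try discriminate.
  f_equal; auto.
Qed.

Lemma map_in_ex (f:term -> term) us vs u : map f us = map f vs -> In u us -> exists v, In v vs /\ f u = f v.
Proof.
  revert vs; induction us as [|x us IH]; intros [|y vs]; simpl; try tauto; intros H P; try discriminate.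
  injection H; intros. destruct P as [->|P]; [eauto|]. destruct (IH vs H0 P) as [v [? ?]]; eauto.
Qed.

Lemma simple_SL L : simple_lit L -> SL (largs L).
Proof.
  intros H t Ht; destruct (H t Ht) as [[x ->]|[[c ->]|[f [us [-> Hus]]]]].
  - left; eauto.
  - right; exists c, []; split; [auto| simpl; tauto].
  - right; exists f, us; split; [reflexivity|]; intros u Hu.
    destruct (Hus u Hu) as [[a ->]|[c ->]]; [left|right]; eauto.
Qed.

Lemma cov_CL L : covering_lit L -> CL (largs L).
Proof.
  intros H r x Hr [f [a [l ->]]] Hx.
  apply (proj2 (H (Fun f (a::l)) (ex_intro _ _ (conj Hr (st_refl _))) ltac:(split; intros [y Hy]; discriminate) x)).
  exact Hx.
Qed.

Lemma occ s l g w : CL l -> In g l -> iscomp g -> (exists t, In t l /\ var_in w t) -> size (s w) < size (tsubst s g).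
Proof. intros HC Hg Hc Hw. pose proof (HC g w Hg Hc Hw). destruct Hc as [f [a [l' ->]]]. apply varin_lt; auto. Qed.

Lemma varin_var x y : var_in x (Var y) -> x = y.
Proof. intro H; inversion H; auto. Qed.

Lemma varin_const x c : var_in x (Fun c []) -> False.
Proof. intro H; inversion H; simpl in *; tauto. Qed.

Lemma C1gen s la lb y g r : SL la -> SL lb -> CL la -> CL lb -> map (tsubst s) la = map (tsubst s) lb ->
  In (Var y, g) (combine la lb) -> iscomp g -> (In r la \/ In r lb) -> iscomp r -> var_in y r -> False.
Proof.
  intros S1 S2 C1 C2 U P Hg Hr Hrc Hy.
  pose proof (comb_eq _ _ _ _ _ U P) as E. simpl in E.
  pose proof (in_combine_r _ _ _ _ P) as Hgb.
  assert (len: length la = length lb) by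
    (rewrite <- (length_map (tsubst s) la), <- (length_map (tsubst s) lb), U; reflexivity).
  assert (Eg : size (tsubst s g) = size (s y)) by (rewrite E; reflexivity).
  destruct Hrc as [f [a [l Hr']]]; subst r.
  destruct Hr as [Hr|Hr].
  2:{ pose proof (occ s lb g y C2 Hgb Hg (ex_intro _ _ (conj Hr Hy))). lia. }
  destruct (comb_ex la lb _ len Hr) as [t Pt].
  pose proof (comb_eq _ _ _ _ _ U Pt) as Et.
  pose proof (in_combine_r _ _ _ _ Pt) as Ht.
  pose proof (varin_lt s y f (a::l) Hy) as Hlt.
  destruct (S2 t Ht) as [[z ->]|[f' [vs [-> Hvs]]]].
  - pose proof (occ s lb g z C2 Hgb Hg (ex_intro _ _ (conj Ht (vi_var z)))).
    assert (size (tsubst s (Fun f (a::l))) = size (s z)) by (rewrite Et; reflexivity). lia.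
  - simpl in Et. injection Et as Ef M.
    inversion Hy as [|f0 ts0 u Hu Hyu]; subst.
    destruct (S1 _ Hr) as [[q Hq]|[f1 [us1 [Hq Hus1]]]]; [discriminate|].
    injection Hq as <- <-.
    destruct (Hus1 u Hu) as [[a' ->]|[c ->]]; [|exfalso; exact (varin_const _ _ Hyu)].
    apply varin_var in Hyu; subst a'.
    change (map (tsubst s) (a::l) = map (tsubst s) vs) in M.
    destruct (map_in_ex _ _ _ _ M Hu) as [v [Hv Ev]]. simpl in Ev.
    destruct (Hvs v Hv) as [[w ->]|[c ->]].
    + pose proof (occ s lb g w C2 Hgb Hg (ex_intro _ _ (conj Ht (vi_fun w f' vs _ Hv (vi_var w))))).
      simpl in Ev. rewrite Ev in Eg. lia.
    + simpl in Ev. rewrite Ev in E. destruct Hg as [fg [ag [lg ->]]]. simpl in E. discriminate.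
Qed.

Lemma C2gen s la lb x z g : CL lb -> map (tsubst s) la = map (tsubst s) lb ->
  In (Var x, g)(combine la lb) -> iscomp g ->
  (In (Var x, Var z) (combine la lb) \/ In (Var z, Var x)(combine la lb)) -> False.
Proof.
  intros C2 U P Hg Hp.
  pose proof (comb_eq _ _ _ _ _ U P) as E. simpl in E.
  pose proof (in_combine_r _ _ _ _ P) as Hgb.
  assert (Eg : size (tsubst s g) = size (s x)) by (rewrite E; reflexivity).
  destruct Hp as [Hp|Hp].
  - pose proof (comb_eq _ _ _ _ _ U Hp) as E2. simpl in E2.
    pose proof (in_combine_r _ _ _ _ Hp) as Hz.
    pose proof (occ s lb g z C2 Hgb Hg (ex_intro _ _ (conj Hz (vi_var z)))). rewrite E2 in Eg. lia.
  - pose proof (in_combine_r _ _ _ _ Hp) as Hz.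
    pose proof (occ s lb g x C2 Hgb Hg (ex_intro _ _ (conj Hz (vi_var x)))). lia.
Qed.

Definition atomize (u : term) : term :=
  match u with Fun c [] => u | _ => Var 0 end.
Definition flatten (u : term) : term :=
  match u with Var _ => Var 0 | Fun f ts => Fun f (map atomize ts) end.

Lemma atomize_inv eta u v : tsubst eta u = atomize v -> vc u.
Proof.
  destruct u as [x|f ts]; [left; eauto|].
  destruct v as [y|c [|w ws]]; simpl; intro H; try discriminate.
  injection H as -> H. destruct ts; [|discriminate]. right; eauto.
Qed.

Lemma flatten_inv eta u v : tsubst eta u = flatten v -> flatt u.
Proof.
  destruct u as [x|f ts]; [left; eauto|].
  destruct v as [y|g ws]; simpl; intro H; try discriminate.
  injection H as -> M. right. exists g, ts; split; [reflexivity|]. intros u Hu.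
  assert (In (tsubst eta u) (map atomize ws)) by (rewrite <- M; apply in_map; auto).
  apply in_map_iff in H as [w [Hw _]]. eapply atomize_inv; eauto.
Qed.

Lemma flatt_simple t : flatt t -> is_var t \/ is_const t \/
    exists f us, t = Fun f us /\ forall u, In u us -> var_or_const u.
Proof.
  intros [[x ->]|[f [us [-> H]]]]; [left; eexists; eauto|].
  right; right; exists f, us; split; [reflexivity|]. intros u Hu.
  destruct (H u Hu) as [[a ->]|[c ->]]; [left|right]; eexists; eauto.
Qed.

Theorem mainTheorem6 (A1 A2 : literal) (sigma : subst) :
  simple_lit A1 -> covering_lit A1 ->
  simple_lit A2 -> covering_lit A2 ->
  mgu sigma A1 A2 ->
  simple_lit (lsubst sigma A1).
Proof.
  intros Hs1 Hc1 Hs2 Hc2 [Hu Hmg].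
  pose proof (simple_SL _ Hs1) as S1. pose proof (simple_SL _ Hs2) as S2.
  pose proof (cov_CL _ Hc1) as C1. pose proof (cov_CL _ Hc2) as C2.
  destruct A1 as [b1 p1 l1], A2 as [b2 p2 l2]. simpl in *.
  unfold unifier, lsubst in Hu; simpl in Hu. injection Hu as -> -> U.
  assert (len: length l1 = length l2) by
    (rewrite <- (length_map (tsubst sigma) l1), <- (length_map (tsubst sigma) l2), U; reflexivity).
  set (deep := fun y => exists g, iscomp g /\ (In (Var y, g) (combine l1 l2) \/ In (g, Var y)(combine l1 l2))).
  assert (CC1 : forall y r, deep y -> (In r l1 \/ In r l2) -> iscomp r -> var_in y r -> False).
  { intros y r [g [Hg [P|P]]] Hr Hrc Hy.
    - exact (C1gen sigma l1 l2 y g r S1 S2 C1 C2 U P Hg Hr Hrc Hy).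
    - apply comb_swap in P.
      exact (C1gen sigma l2 l1 y g r S2 S1 C2 C1 (eq_sym U) P Hg (proj1 (or_comm _ _) Hr) Hrc Hy). }
  assert (CC2 : forall x z, deep x -> (In (Var x, Var z)(combine l1 l2) \/ In (Var z, Var x)(combine l1 l2)) -> False).
  { intros x z [g [Hg [P|P]]] Hp.
    - exact (C2gen sigma l1 l2 x z g C2 U P Hg Hp).
    - apply comb_swap in P.
      apply (C2gen sigma l2 l1 x z g C1 (eq_sym U) P Hg).
      destruct Hp as [Hp|Hp]; apply comb_swap in Hp; auto. }
  set (th := fun y => if excluded_middle_informative (deep y) then flatten (sigma y) else atomize (sigma y)).
  assert (Key : forall r f us, (In r l1 \/ In r l2) -> r = Fun f us -> (forall u, In u us -> vc u) ->
     tsubst th r = flatten (tsubst sigma r)).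
  { intros r f us Hr -> Hvc. simpl. f_equal. rewrite map_map. apply map_ext_in.
    intros u Hu. destruct (Hvc u Hu) as [[a ->]|[c ->]]; [|reflexivity].
    simpl. unfold th. destruct (excluded_middle_informative (deep a)) as [D|_]; [|reflexivity].
    exfalso. apply (CC1 a (Fun f us) D Hr).
    - destruct us as [|t us]; [inversion Hu|]. exists f, t, us; reflexivity.
    - exact (vi_fun a f us _ Hu (vi_var a)). }
  assert (Hth : unifier th (Lit b2 p2 l1) (Lit b2 p2 l2)).
  { unfold unifier, lsubst; simpl. f_equal. apply map_ext_comb; [exact len|].
    intros s t P.
    pose proof (comb_eq _ _ _ _ _ U P) as Es.
    pose proof (in_combine_l _ _ _ _ P) as Hs.
    pose proof (in_combine_r _ _ _ _ P) as Ht.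
    destruct (S1 s Hs) as [[x ->]|[f [us [-> Hus]]]];
    destruct (S2 t Ht) as [[z ->]|[f' [vs [-> Hvs]]]].
    - change (th x = th z). unfold th.
      destruct (excluded_middle_informative (deep x)) as [D|_]; [exfalso; exact (CC2 x z D (or_introl P))|].
      destruct (excluded_middle_informative (deep z)) as [D|_]; [exfalso; exact (CC2 z x D (or_intror P))|].
      simpl in Es; rewrite Es; reflexivity.
    - rewrite (Key (Fun f' vs) f' vs (or_intror Ht) eq_refl Hvs).
      change (tsubst th (Var x)) with (th x). change (tsubst sigma (Var x)) with (sigma x) in Es.
      unfold th. destruct (excluded_middle_informative (deep x)) as [D|n].
      + rewrite Es; reflexivity.
      + destruct vs as [|v vs'].
        * rewrite Es. reflexivity.
        * exfalso; apply n. exists (Fun f' (v::vs')); split; [exists f', v, vs'; reflexivity| left; exact P].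
    - rewrite (Key (Fun f us) f us (or_introl Hs) eq_refl Hus).
      change (tsubst th (Var z)) with (th z). change (tsubst sigma (Var z)) with (sigma z) in Es.
      unfold th. destruct (excluded_middle_informative (deep z)) as [D|n].
      + rewrite Es; reflexivity.
      + destruct us as [|v us'].
        * rewrite <- Es. reflexivity.
        * exfalso; apply n. exists (Fun f (v::us')); split; [exists f, v, us'; reflexivity| right; exact P].
    - rewrite (Key (Fun f us) f us (or_introl Hs) eq_refl Hus).
      rewrite (Key (Fun f' vs) f' vs (or_intror Ht) eq_refl Hvs).
      rewrite Es; reflexivity. }
  destruct (Hmg th Hth) as [eta Heta].
  unfold simple_lit, lsubst; simpl. intros t Ht.
  apply in_map_iff in Ht as [s [<- Hs]].
  apply flatt_simple.
  destruct (S1 s Hs) as [[x ->]|[f [us [-> Hus]]]].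
  - simpl. pose proof (Heta x) as H. unfold th in H.
    destruct (excluded_middle_informative (deep x)).
    + exact (flatten_inv eta (sigma x) (sigma x) (eq_sym H)).
    + destruct (atomize_inv eta (sigma x) (sigma x) (eq_sym H)) as [[a ->]|[c ->]].
      * left; eauto.
      * right; exists c, []; split; [reflexivity| simpl; tauto].
  - simpl. right. exists f, (map (tsubst sigma) us). split; auto. intros u Hu.
    apply in_map_iff in Hu as [u0 [<- Hu0]].
    destruct (Hus u0 Hu0) as [[a ->]|[c ->]]; [|simpl; right; eexists; reflexivity].
    simpl. pose proof (Heta a) as H. unfold th in H.
    destruct (excluded_middle_informative (deep a)) as [D|_].
    + exfalso. apply (CC1 a (Fun f us) D (or_introl Hs)).
      * destruct us as [|t us]; [inversion Hu0|]. exists f, t, us; reflexivity.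
      * exact (vi_fun a f us _ Hu0 (vi_var a)).
    + exact (atomize_inv eta (sigma a) (sigma a) (eq_sym H)).
Qed.
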